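(* Let $q$ be a prime power, $n\ge 2$, $K=\mathbb{F}_{q^n}$, $d=\frac{q^n-1}{q-1}$. The function fields $E_{1,\mathrm{Kum}}=K(x,y)$ with $y^d=s_{n,1}(x)$ and $E_{n-1,\mathrm{Kum}}=K(x,y)$ with $y^d=s_{n,n-1}(x)$ are both isomorphic over $K$ to the trace-norm function field $E_n=K(x,y)$ with $y^{q^{n-1}}+\dots+y^q+y=x^{1+q+\dots+q^{n-1}}$.
   Context: For a prime power $q$ and integers $n\ge 1$, $0\le i\le n$, the $i$-th $(n,q)$-elementary symmetric polynomial is $s_{n,i}(t)=\sum_{0\le j_1<\dots<j_i\le n-1} t^{q^{j_1}+\dots+q^{j_i}}\in\mathbb{F}_p[t]$; $s_{n,1}$ is the trace $\sum_{j=0}^{n-1}t^{q^j}$. *)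

(* Defs.v *)
From HB Require Import structures.
From mathcomp Require Import all_boot all_algebra all_field.
Set Implicit Arguments. Unset Strict Implicit. Unset Printing Implicit Defensive.
Import GRing.Theory.
Local Open Scope ring_scope.

Definition sym_q (R : nzRingType) (q n i : nat) : {poly R} :=
  \sum_(S : {set 'I_n} | #|S| == i) 'X^(\sum_(j in S) q ^ j)%N.

(* Evaluation of a bivariate polynomial P(x,y) in {poly {poly K}} (outer variable y,
   coefficients in K[x]) at (x,y) in a field F containing K via phi. *)
Definition eval2 (K F : fieldType) (phi : {rmorphism K -> F})
    (P : {poly {poly K}}) (x y : F) : F :=
  (map_poly (fun c : {poly K} => (map_poly phi c).[x]) P).[y].

(* (F, phi, x, y) is a presentation of the function field K(x,y) with f(x,y)=0:
   x transcendental over K, f(x,y) = 0, and F = K(x,y) (generated by x,y). *)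
Definition is_function_field (K F : fieldType) (phi : {rmorphism K -> F})
    (f : {poly {poly K}}) (x y : F) : Prop :=
  [/\ (forall p : {poly K}, p != 0 -> (map_poly phi p).[x] != 0),
      eval2 phi f x y = 0 &
      (forall z : F, exists P Q : {poly {poly K}},
          eval2 phi Q x y != 0 /\ z = eval2 phi P x y / eval2 phi Q x y)].

Definition K_isomorphic (K F1 F2 : fieldType) (phi1 : {rmorphism K -> F1})
    (phi2 : {rmorphism K -> F2}) : Prop :=
  exists sigma : {rmorphism F1 -> F2},
    bijective sigma /\ forall c : K, sigma (phi1 c) = phi2 c.

Definition kummer_poly (K : fieldType) (q n i : nat) : {poly {poly K}} :=
  'X^((q ^ n - 1) %/ (q - 1)) - (sym_q K q n i)%:P.

Definition trace_norm_poly (K : fieldType) (q n : nat) : {poly {poly K}} :=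
  \sum_(j < n) 'X^(q ^ j) - ('X^(\sum_(j < n) q ^ j)%N)%:P.

(* Main.v *)
Require Import Defs.
From HB Require Import structures.
From mathcomp Require Import all_boot all_algebra all_field.
From mathcomp Require Import ring.
From Stdlib Require Import ClassicalEpsilon.
Set Implicit Arguments. Unset Strict Implicit. Unset Printing Implicit Defensive.
Import GRing.Theory.
Local Open Scope ring_scope.

Definition ratset (A F : fieldType) (E : A -> F) (z : F) : Prop :=
  exists P Q, E Q != 0 /\ z = E P / E Q.

Lemma iso_lemma (K : fieldType) (F1 F2 : fieldType) (A : comNzRingType)
  (phi1 : {rmorphism K -> F1}) (phi2 : {rmorphism K -> F2})
  (E1 : {rmorphism A -> F1}) (E2 : {rmorphism A -> F2}) (emb : K -> A) :
  (forall c, E1 (emb c) = phi1 c) -> (forall c, E2 (emb c) = phi2 c) ->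
  (forall P, (E1 P == 0) = (E2 P == 0)) ->
  (forall z, exists P Q, E1 Q != 0 /\ z = E1 P / E1 Q) ->
  (forall w, exists P Q, E2 Q != 0 /\ w = E2 P / E2 Q) ->
  exists sigma : {rmorphism F1 -> F2},
    bijective sigma /\ forall c : K, sigma (phi1 c) = phi2 c.
Proof.
move=> hc1 hc2 hker gen1 gen2.
have heq P P' : (E1 P == E1 P') = (E2 P == E2 P').
  by rewrite -[E1 P == _]subr_eq0 -[E2 P == _]subr_eq0 -(rmorphB E1) -(rmorphB E2) hker.
have [pick pickP] : {pk : F1 -> A * A | forall z,
    E1 (pk z).2 != 0 /\ z = E1 (pk z).1 / E1 (pk z).2}.
  have g z : {PQ : A * A | E1 PQ.2 != 0 /\ z = E1 PQ.1 / E1 PQ.2}.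
    apply: constructive_indefinite_description.
    by have [P [Q h]] := gen1 z; exists (P, Q).
  by exists (fun z => proj1_sig (g z)) => z; case: (g z).
pose sigma z := E2 (pick z).1 / E2 (pick z).2.
have key P Q : E1 Q != 0 -> sigma (E1 P / E1 Q) = E2 P / E2 Q.
  move=> nzQ; rewrite /sigma; set z := E1 P / E1 Q.
  have [nz2 ez] := pickP z.
  have nzQ2 : E2 Q != 0 by rewrite -hker.
  have nz22 : E2 (pick z).2 != 0 by rewrite -hker.
  apply/eqP; rewrite eqr_div // -[E2 _ * E2 Q]rmorphM -[E2 P * _]rmorphM -heq.
  by rewrite !rmorphM -eqr_div // -ez.
have sig1 : sigma 1 = 1.
  have nz : E1 1 != 0 by rewrite rmorph1 oner_eq0.
  by rewrite -(divff nz) key // divff // rmorph1 oner_eq0.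
have sigD : {morph sigma : a b / a + b}.
  move=> a b; have [P [Q [nQ ->]]] := gen1 a; have [P' [Q' [nQ' ->]]] := gen1 b.
  have nQ2 : E2 Q != 0 by rewrite -hker.
  have nQ2' : E2 Q' != 0 by rewrite -hker.
  have nz : E1 (Q * Q') != 0 by rewrite rmorphM mulf_neq0.
  rewrite addf_div // -!rmorphM -rmorphD key // !key //.
  by rewrite addf_div // !rmorphD !rmorphM.
have sigM : {morph sigma : a b / a * b}.
  move=> a b; have [P [Q [nQ ->]]] := gen1 a; have [P' [Q' [nQ' ->]]] := gen1 b.
  have nz : E1 (Q * Q') != 0 by rewrite rmorphM mulf_neq0.
  by rewrite mulf_div -!rmorphM key // !key // !rmorphM mulf_div.
have sig0 : sigma 0 = 0.
  by apply/eqP; rewrite -(addrI (sigma 0) (_ : sigma 0 + sigma 0 = sigma 0 + 0)) // -sigD !addr0.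
pose sa := GRing.isNmodMorphism.Build _ _ sigma (conj sig0 sigD).
pose sm := GRing.isMonoidMorphism.Build _ _ sigma (conj sig1 sigM).
pose sR : {rmorphism F1 -> F2} := HB.pack sigma sa sm.
exists sR; split; last first.
  move=> c /=; have nz : E1 1 != 0 by rewrite rmorph1 oner_eq0.
  by rewrite -hc1 -[E1 (emb c)]divr1 -(rmorph1 E1) key // hc2 rmorph1 divr1.
have surj w : exists z, sigma z = w.
  have [P [Q [nQ ->]]] := gen2 w.
  by exists (E1 P / E1 Q); rewrite key // hker.
have [g hg] : {g : F2 -> F1 | forall w, sigma (g w) = w}.
  have gg w : {z | sigma z = w} by apply: constructive_indefinite_description.
  by exists (fun w => proj1_sig (gg w)) => w; case: (gg w).
exists g => [z|w] //; apply: (fmorph_inj sR); exact: hg.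
Qed.

Definition vdot (K F : fieldType) (h : {poly K} -> F) (y : F) (d : nat) (r : nat -> {poly K}) :=
  \sum_(i < d) h (r i) * y ^+ i.

Definition shiftv (K : fieldType) (T : {poly K}) (e : nat) (c : nat -> {poly K}) : nat -> {poly K} :=
  fun i => if i is i'.+1 then c i' else T * c e.

Lemma vdot_shift (K F : fieldType) (h : {rmorphism {poly K} -> F}) (y : F) (e : nat)
   (T : {poly K}) (c : nat -> {poly K}) :
  y ^+ e.+1 = h T ->
  vdot h y e.+1 (shiftv T e c) = y * vdot h y e.+1 c.
Proof.
move=> hT; rewrite /vdot big_ord_recl [in RHS]big_ord_recr /= mulrDr mulr_sumr.
rewrite addrC; congr (_ + _).
  by apply: eq_bigr => i _; rewrite /shiftv /bump /= exprS; ring.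
by rewrite rmorphM -hT exprS; ring.
Qed.

Lemma iter_shift0 (K : fieldType) (T : {poly K}) (e : nat) (c : nat -> {poly K}) :
  T.[0] = 0 -> forall k i,
  (iter k (shiftv T e) c i).[0] = if (k <= i)%N then (c (i - k)%N).[0] else 0.
Proof.
move=> T0; elim=> [|k IH] i /=; first by rewrite subn0.
case: i => [|i] /=; first by rewrite hornerM T0 mul0r.
by rewrite IH ltnS subSS.
Qed.

Lemma vdot_iter (K F : fieldType) (h : {rmorphism {poly K} -> F}) (y : F) (e : nat)
   (T : {poly K}) (c : nat -> {poly K}) :
  y ^+ e.+1 = h T -> forall k,
  vdot h y e.+1 (iter k (shiftv T e) c) = y ^+ k * vdot h y e.+1 c.
Proof.
move=> hT; elim=> [|k IH] /=; first by rewrite mul1r.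
by rewrite vdot_shift // IH exprS mulrA.
Qed.

Lemma first_root (K F : fieldType) (h : {rmorphism {poly K} -> F}) (y : F) (e : nat)
   (T : {poly K}) (c : nat -> {poly K}) :
  (forall p, p != 0 -> h p != 0) -> y ^+ e.+1 = h T -> T.[0] = 0 ->
  vdot h y e.+1 c = 0 -> (c 0%N).[0] = 0.
Proof.
move=> htr hT T0 hc.
pose A : 'M[{poly K}]_e.+1 := \matrix_(i, k) iter k (shiftv T e) c i.
pose v : 'rV[F]_e.+1 := \row_i y ^+ i.
have hA : \det (map_mx h A) = 0.
  apply/eqP/det0P; exists v.
    apply/eqP => /matrixP /(_ 0 0); rewrite !mxE expr0 => /eqP; by rewrite oner_eq0.
  apply/matrixP => i k; rewrite !mxE.
  transitivity (vdot h y e.+1 (iter k (shiftv T e) c)).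
    by apply: eq_bigr => j _; rewrite !mxE mulrC.
  by rewrite vdot_iter // hc mulr0.
have dA : \det A = 0.
  by apply/eqP; apply: contraT => /htr; rewrite -det_map_mx hA eqxx.
have : \det (map_mx (horner_eval 0) A) = 0 by rewrite det_map_mx dA /= horner_evalE horner0.
rewrite det_trig; last first.
  by apply/is_trig_mxP => i j lij; rewrite !mxE horner_evalE iter_shift0 // leqNgt lij.
under eq_bigr => i _ do rewrite !mxE horner_evalE iter_shift0 // leqnn subnn.
by rewrite prodr_const card_ord => /eqP; rewrite expf_eq0 /= => /eqP.
Qed.

Lemma divX_eq (K : fieldType) (p : {poly K}) : p.[0] = 0 -> p = (p %/ 'X) * 'X.
Proof.
move=> p0; have : ('X - 0%:P) %| p by rewrite dvdp_XsubCl /root p0.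
by rewrite polyC0 subr0 => /divpK ->.
Qed.

Lemma lin_indep (K F : fieldType) (h : {rmorphism {poly K} -> F}) (x y : F) (e : nat)
   (u : {poly K}) :
  (forall p, p != 0 -> h p != 0) -> h 'X = x -> u.[0] != 0 ->
  y ^+ e.+1 = h ('X * u) ->
  forall r, vdot h y e.+1 r = 0 -> forall i, (i <= e)%N -> r i = 0.
Proof.
move=> htr hX u0 hy.
set T := 'X * u.
have T0 : T.[0] = 0 by rewrite /T hornerM hornerX mul0r.
have unz : u != 0 by apply: contraNneq u0 => ->; rewrite horner0.
have xnz : x != 0 by rewrite -hX htr // polyX_eq0.
have ynz : y != 0.
  apply/eqP => y0; move: (htr T (mulf_neq0 (negbT (polyX_eq0 _)) unz)).
  by rewrite -hy y0 expr0n eqxx.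
pose rot (c : nat -> {poly K}) := fun i => if (i < e)%N then u * c i.+1 else c 0%N %/ 'X.
have rotP c : (c 0%N).[0] = 0 -> vdot h y e.+1 c = 0 -> vdot h y e.+1 (rot c) = 0.
  move=> c0 vc.
  have : y * vdot h y e.+1 (rot c) = h u * vdot h y e.+1 c.
    rewrite /vdot big_ord_recr [in RHS]big_ord_recl /= /rot ltnn mulrDr mulrDr mulr_sumr mulr_sumr.
    rewrite [in LHS]addrC; congr (_ + _); last first.
      by apply: eq_bigr => i _; rewrite ltn_ord /bump /= exprS !rmorphM; ring.
    rewrite [c 0%N in RHS](divX_eq c0) expr0 mulr1.
    have -> : y * (h (c 0%N %/ 'X) * y ^+ e) = h (c 0%N %/ 'X) * (y ^+ e.+1) by rewrite exprS; ring.
    rewrite hy !rmorphM hX; ring.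
  by rewrite vc mulr0 => /eqP; rewrite mulf_eq0 (negbTE ynz) /= => /eqP.
have root_all : forall r, vdot h y e.+1 r = 0 -> forall k, (k <= e)%N -> (r k).[0] = 0.
  move=> r vr.
  have inv k : (k <= e)%N -> exists c, vdot h y e.+1 c = 0 /\
      forall i, (i + k <= e)%N -> c i = u ^+ k * r (i + k)%N.
    elim: k => [|k IH] lke.
      by exists r; split => // i _; rewrite expr0 mul1r addn0.
    have [c [vc hc]] := IH (ltnW lke).
    have c0 : (c 0%N).[0] = 0 by apply: (first_root htr hy T0 vc).
    exists (rot c); split; first exact: rotP.
    move=> i hi; rewrite /rot.
    have -> : (i < e)%N by apply: leq_trans hi; rewrite addnS ltnS leq_addr.
    by rewrite hc ?addSnnS // exprS mulrA.
  move=> k lke; have [c [vc hc]] := inv k lke.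
  have := first_root htr hy T0 vc; rewrite hc ?add0n // hornerM horner_exp.
  by move/eqP; rewrite mulf_eq0 expf_eq0 (negbTE u0) andbF /= => /eqP.
suff main : forall N (r : nat -> {poly K}), (forall i, (i <= e)%N -> (size (r i) <= N)%N) ->
    vdot h y e.+1 r = 0 -> forall i, (i <= e)%N -> r i = 0.
  move=> r vr; apply: (main (\max_(i < e.+1) size (r i))) => // i lie.
  by apply: (@leq_bigmax_cond _ _ (fun j : 'I_e.+1 => size (r j)) (Ordinal (lie : (i < e.+1)%N))).
elim=> [|N IH] r hs vr i lie.
  by apply/eqP; rewrite -size_poly_eq0 -leqn0 hs.
have r0 := root_all r vr.
pose r' j := r j %/ 'X.
have er j : (j <= e)%N -> r j = r' j * 'X by move=> lje; apply: divX_eq; apply: r0.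
have vr' : vdot h y e.+1 r' = 0.
  have : vdot h y e.+1 r = x * vdot h y e.+1 r'.
    rewrite /vdot mulr_sumr; apply: eq_bigr => j _.
    by rewrite (er j (ltn_ord j)) rmorphM hX; ring.
  by rewrite vr => /esym/eqP; rewrite mulf_eq0 (negbTE xnz) /= => /eqP.
have hs' j : (j <= e)%N -> (size (r' j) <= N)%N.
  move=> lje; have [->|nz] := eqVneq (r' j) 0; first by rewrite size_poly0.
  by rewrite -ltnS -size_mulX // -er // hs.
by rewrite er // (IH r' hs' vr' i lie) mul0r.
Qed.

Lemma ker_char (K F : fieldType) (h : {rmorphism {poly K} -> F}) (x y : F) (e : nat)
   (u : {poly K}) :
  (forall p, p != 0 -> h p != 0) -> h 'X = x -> u.[0] != 0 ->
  y ^+ e.+1 = h ('X * u) ->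
  forall P : {poly {poly K}},
    ((map_poly h P).[y] == 0) = (Pdiv.Ring.rmodp P ('X^(e.+1) - ('X * u)%:P) == 0).
Proof.
move=> htr hX u0 hy P.
set f := 'X^(e.+1) - _.
have mf : f \is monic by apply: monicXnsubC.
set R := Pdiv.Ring.rmodp P f.
have hf : (map_poly h f).[y] = 0.
  by rewrite /f rmorphB /= map_polyXn map_polyC /= hornerD hornerN hornerXn hornerC hy subrr.
have -> : (map_poly h P).[y] = (map_poly h R).[y].
  rewrite {1}(Pdiv.RingMonic.rdivp_eq mf P) rmorphD rmorphM /= hornerD hornerM hf mulr0 add0r.
  by [].
have sR : (size R <= e.+1)%N.
  by rewrite -ltnS -(size_XnsubC ('X * u) (ltn0Sn e)) Pdiv.Ring.ltn_rmodpN0 // monic_neq0.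
apply/eqP/eqP => [hR|->]; last by rewrite rmorph0 horner0.
have v0 : vdot h y e.+1 (fun i => R`_i) = 0.
  rewrite -hR (horner_coef_wide _ (leq_trans (size_poly _ _) sR)).
  by apply: eq_bigr => i _; rewrite coef_map.
have cR := lin_indep htr hX u0 hy v0.
apply/polyP => i; rewrite coef0.
have [lie|lei] := leqP i e; first exact: cR.
by rewrite nth_default // (leq_trans sR lei).
Qed.

Lemma XnsubXn_neq0 (R : nzRingType) (a b : nat) : a != b -> ('X^a - 'X^b : {poly R}) != 0.
Proof.
move=> nab; rewrite subr_eq0; apply: contra nab => /eqP e.
by have := congr1 (fun q : {poly R} => size q) e; rewrite !size_polyXn => -[->].
Qed.

Lemma alg_trans (K : finFieldType) (F : fieldType) (phi : {rmorphism K -> F}) (x y : F)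
   (T : {poly K}) (d : nat) : (0 < d)%N ->
  (forall p, p != 0 -> (map_poly phi p).[x] != 0) -> x ^+ d = (map_poly phi T).[y] ->
  forall p, p != 0 -> (map_poly phi p).[y] != 0.
Proof.
move=> d0 htr hxy p pnz; apply/negP => /eqP hp.
have cy : commr_rmorph phi y by move=> c; apply: mulrC.
pose H := horner_morph cy.
have HE q : H q = (map_poly phi q).[y] by [].
have Hmod q : H q = H (q %% p).
  by rewrite !HE {1}(divp_eq q p) rmorphD rmorphM /= hornerD hornerM hp mulr0 add0r.
pose s := size p.
pose g (k : 'I_(#|K| ^ s).+1) : s.-tuple K := [tuple (T ^+ k %% p)`_i | i < s].
have : ~~ injectiveb g.
  apply/negP => /injectiveP /leq_card; rewrite card_tuple card_ord ltnn //.
case/injectivePn => k1 [k2 nk gk].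
have eT : T ^+ k1 %% p = T ^+ k2 %% p.
  apply/polyP => i; have [lis|lsi] := ltnP i s.
    by have := congr1 (fun t => tnth t (Ordinal lis)) gk; rewrite !tnth_mktuple.
  by rewrite !nth_default // (leq_trans _ lsi) // ltnW // ltn_modp.
have : (map_poly phi ('X^(d * k1) - 'X^(d * k2))).[x] = 0.
  rewrite rmorphB /= !map_polyXn hornerD hornerN !hornerXn !exprM hxy.
  by rewrite -!horner_exp -!rmorphXn -!HE Hmod eT -Hmod subrr.
apply/eqP/htr/XnsubXn_neq0; rewrite eqn_mul2l negb_or -lt0n d0 /=.
exact: nk.
Qed.

Lemma gen_closed (K F : fieldType) (phi : {rmorphism K -> F}) (x y : F) (S : F -> Prop) :
  (forall c, S (phi c)) -> S x -> S y -> (forall a b, S a -> S b -> S (a + b)) ->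
  (forall a b, S a -> S b -> S (a * b)) -> forall P, S (eval2 phi P x y).
Proof.
move=> Sc Sx Sy SD SM.
have S0 : S 0 by rewrite -(rmorph0 phi); apply: Sc.
have SX z k : S z -> S (z ^+ k).
  move=> Sz; elim: k => [|k IH]; first by rewrite expr0 -(rmorph1 phi); apply: Sc.
  by rewrite exprS; apply: SM.
have Sh (c : {poly K}) : S ((map_poly phi c).[x]).
  rewrite horner_coef; apply: (big_ind S) => // i _; apply: SM; last exact: SX.
  by rewrite coef_map; apply: Sc.
move=> P; rewrite /eval2 horner_coef; apply: (big_ind S) => // i _; apply: SM; last exact: SX.
by rewrite coef_map_id0 ?rmorph0 ?horner0.
Qed.

Lemma ratset_closed (A : comNzRingType) (F : fieldType) (E : {rmorphism A -> F}) :
  let RS z := exists P Q, E Q != 0 /\ z = E P / E Q in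
  [/\ forall P, RS (E P),
      forall a b, RS a -> RS b -> RS (a + b),
      forall a b, RS a -> RS b -> RS (a * b) &
      forall a b, RS a -> RS b -> b != 0 -> RS (a / b)].
Proof.
move=> RS; split.
- by move=> P; exists P, 1; rewrite rmorph1 divr1 oner_eq0.
- move=> a b [P [Q [nQ ->]]] [P' [Q' [nQ' ->]]].
  exists (P * Q' + P' * Q), (Q * Q'); rewrite rmorphM mulf_neq0 //; split => //.
  by rewrite addf_div // rmorphD !rmorphM.
- move=> a b [P [Q [nQ ->]]] [P' [Q' [nQ' ->]]].
  exists (P * P'), (Q * Q'); rewrite rmorphM mulf_neq0 //; split => //.
  by rewrite mulf_div !rmorphM.
- move=> a b [P [Q [nQ ->]]] [P' [Q' [nQ' ->]]] nb.
  have nP' : E P' != 0 by apply: contraNneq nb => ->; rewrite mul0r.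
  exists (P * Q'), (Q * P'); rewrite rmorphM mulf_neq0 //; split => //.
  by rewrite !rmorphM invf_div mulf_div.
Qed.

Lemma map_polyC0 (R S : nzRingType) (f : R -> S) a : f 0 = 0 -> map_poly f a%:P = (f a)%:P.
Proof. by move=> f0; apply/polyP => i; rewrite coef_map_id0 // !coefC; case: (i == 0)%N. Qed.
Lemma map_polyX0 (R S : nzRingType) (f : R -> S) : f 0 = 0 -> f 1 = 1 -> map_poly f 'X = 'X.
Proof. by move=> f0 f1; apply/polyP => i; rewrite coef_map_id0 // !coefX; case: (i == 1)%N. Qed.
Lemma eval2C (K F : fieldType) (phi : {rmorphism K -> F}) x y c : eval2 phi (c%:P%:P) x y = phi c.
Proof. by rewrite /eval2 map_polyC0 ?hornerC ?map_polyC ?hornerC //; exact: raddf0. Qed.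
Lemma eval2Y (K F : fieldType) (phi : {rmorphism K -> F}) x y : eval2 phi 'X x y = y.
Proof.
rewrite /eval2 map_polyX0 ?hornerX //.
  by rewrite map_polyC0 ?hornerC //; exact: raddf0.
by rewrite -polyC1 map_polyC0 ?hornerC; [exact: rmorph1 | exact: raddf0].
Qed.
Lemma eval2X (K F : fieldType) (phi : {rmorphism K -> F}) x y : eval2 phi ('X%:P) x y = x.
Proof.
rewrite /eval2 map_polyC0 ?hornerC ?map_polyX ?hornerX //.
by rewrite -polyC0 map_polyC0 ?hornerC //; exact: raddf0.
Qed.

Lemma master (K : finFieldType) (F1 F2 : fieldType) (phi1 : {rmorphism K -> F1})
   (phi2 : {rmorphism K -> F2}) (x1 y1 : F1) (x2 y2 : F2) (e : nat) (u : {poly K}) :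
  u.[0] != 0 ->
  (forall p, p != 0 -> (map_poly phi1 p).[x1] != 0) ->
  y1 ^+ e.+1 = (map_poly phi1 ('X * u)).[x1] ->
  (forall z, exists P Q, eval2 phi1 Q x1 y1 != 0 /\ z = eval2 phi1 P x1 y1 / eval2 phi1 Q x1 y1) ->
  (forall p, p != 0 -> (map_poly phi2 p).[x2] != 0) ->
  x2 ^+ e.+1 = (map_poly phi2 ('X * u)).[y2] ->
  (forall w, exists P Q, eval2 phi2 Q x2 y2 != 0 /\ w = eval2 phi2 P x2 y2 / eval2 phi2 Q x2 y2) ->
  K_isomorphic phi1 phi2.
Proof.
move=> u0 tr1 hy1 gen1 tr2 hx2 gen2.
have c1 : commr_rmorph phi1 x1 by move=> c; apply: mulrC.
pose h1 := horner_morph c1.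
have c1' : commr_rmorph h1 y1 by move=> c; apply: mulrC.
pose E1 := horner_morph c1'.
have c2 : commr_rmorph phi2 y2 by move=> c; apply: mulrC.
pose h2 := horner_morph c2.
have c2' : commr_rmorph h2 x2 by move=> c; apply: mulrC.
pose E2 := horner_morph c2'.
have tr2' := alg_trans (ltn0Sn e) tr2 hx2.
have hker P : (E1 P == 0) = (E2 P == 0).
  rewrite (@ker_char K F1 h1 x1 y1 e u) //; last exact: horner_morphX.
  by rewrite (@ker_char K F2 h2 y2 x2 e u) //; exact: horner_morphX.
have [RSE RSD RSM RSV] := ratset_closed E2.
rewrite /K_isomorphic; apply: (@iso_lemma K F1 F2 _ phi1 phi2 E1 E2 (fun c => c%:P%:P)).
- by move=> c; apply: eval2C.
- by move=> c; apply: eval2C.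
- exact: hker.
- exact: gen1.
move=> w; have [P [Q [nQ ->]]] := gen2 w.
have RSe R : exists P Q, E2 Q != 0 /\ eval2 phi2 R x2 y2 = E2 P / E2 Q.
  apply: (gen_closed (S := fun z => exists P Q, E2 Q != 0 /\ z = E2 P / E2 Q)) => //.
  - by move=> c; have ee : E2 (c%:P%:P) = phi2 c := eval2C phi2 y2 x2 c; rewrite -ee; apply: RSE.
  - by have ee : E2 'X = x2 := eval2Y phi2 y2 x2; rewrite -{1}ee; apply: RSE.
  - by have ee : E2 ('X%:P) = y2 := eval2X phi2 y2 x2; rewrite -{1}ee; apply: RSE.
by apply: RSV => //; apply: RSe.
Qed.

Lemma sym1E (R : nzRingType) q n : sym_q R q n 1 = \sum_(j < n) 'X^(q ^ j).
Proof.
rewrite /sym_q.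
pose F (S : {set 'I_n}) : {poly R} := 'X^(\sum_(i in S) q ^ i).
transitivity (\sum_(S in [set [set j] | j : 'I_n]) F S).
  apply: eq_bigl => S; apply/cards1P/imsetP => [[j ->]|[j _ ->]]; by exists j.
rewrite big_imset /=.
  by apply: eq_big => // j; rewrite /F big_set1.
by move=> a b _ _ /= /set1_inj.
Qed.

Lemma sumD (q n : nat) (j : 'I_n) :
  (\sum_(i in [set~ j]) q ^ i = \sum_(i < n) q ^ i - q ^ j)%N.
Proof.
rewrite [X in (_ = X - _)%N](bigD1 j) //= addKn.
by apply: eq_bigl => i; rewrite in_setC1.
Qed.

Lemma symn1E (R : nzRingType) q n : (0 < n)%N -> sym_q R q n n.-1 =
  \sum_(j < n) 'X^(\sum_(i < n) q ^ i - q ^ j)%N.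
Proof.
move=> n0; rewrite /sym_q.
pose F (S : {set 'I_n}) : {poly R} := 'X^(\sum_(i in S) q ^ i).
transitivity (\sum_(S in [set [set~ j] | j : 'I_n]) F S).
  apply: eq_bigl => S; apply/idP/imsetP => [hS|[j _ ->]]; last by rewrite cardsC1 card_ord.
  have : #|~: S| == 1%N.
    have := cardsC S; rewrite card_ord (eqP hS) => e.
    case: n n0 S hS e F => [|n] // _ S hS e F.
    by rewrite -(eqn_add2l n) e addn1.
  by case/cards1P => j hj; exists j => //; rewrite -hj setCK.
rewrite big_imset /=.
  by apply: eq_big => // j; rewrite /F sumD.
by move=> a b _ _ /= /setC_inj /set1_inj.
Qed.

Lemma d_eq (q n : nat) : (1 < q)%N -> ((q ^ n - 1) %/ (q - 1) = \sum_(j < n) q ^ j)%N.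
Proof.
move=> q1; rewrite subn1 predn_exp subn1 mulKn //.
by rewrite -subn1 subn_gt0.
Qed.

Lemma trXu (R : nzRingType) (q n : nat) : (0 < q)%N ->
  (\sum_(j < n) 'X^(q ^ j) : {poly R}) = 'X * \sum_(j < n) 'X^(q ^ j - 1).
Proof.
move=> q0; rewrite mulr_sumr; apply: eq_bigr => j _.
by rewrite -exprS subn1 prednK // expn_gt0 q0.
Qed.

Lemma u0E (R : nzRingType) (q n : nat) : (1 < q)%N -> (0 < n)%N ->
  (\sum_(j < n) 'X^(q ^ j - 1) : {poly R}).[0] = 1.
Proof.
move=> q1; case: n => // n _.
rewrite horner_sum big_ord_recl /= expn0 subnn hornerXn expr0 big1 ?addr0 // => j _.
rewrite hornerXn expr0n /= /bump /= add1n.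
have : (1 < q ^ j.+1)%N by rewrite -{1}(expn0 q) ltn_exp2l.
by rewrite -subn_gt0 => /lt0n_neq0/negbTE ->.
Qed.

Lemma eval2_morph (K F : fieldType) (phi : {rmorphism K -> F}) (x y : F) :
  {E : {rmorphism {poly {poly K}} -> F} | forall P, E P = eval2 phi P x y}.
Proof.
have c1 : commr_rmorph phi x by move=> c; apply: mulrC.
have c1' : commr_rmorph (horner_morph c1) y by move=> c; apply: mulrC.
by exists (horner_morph c1').
Qed.

Lemma eval2P (K F : fieldType) (phi : {rmorphism K -> F}) x y p :
  eval2 phi (p%:P) x y = (map_poly phi p).[x].
Proof.
rewrite /eval2 map_polyC0 ?hornerC //.
by rewrite -polyC0 map_polyC0 ?hornerC //; exact: raddf0.
Qed.

Lemma inv_trans (K F : fieldType) (phi : {rmorphism K -> F}) (x : F) :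
  (forall p, p != 0 -> (map_poly phi p).[x] != 0) ->
  forall p, p != 0 -> (map_poly phi p).[x^-1] != 0.
Proof.
move=> tr p pnz.
have xnz : x != 0.
  by have := tr 'X (negbT (polyX_eq0 _)); rewrite map_polyX hornerX.
have [s es] : {s | size p = s.+1} by exists (size p).-1; rewrite prednK // size_poly_gt0.
pose r := \poly_(i < s.+1) p`_(s - i).
have rnz : r != 0.
  apply/eqP => /polyP /(_ 0%N); rewrite coef_poly /= subn0 coef0.
  move/eqP; apply/negP; rewrite -[s]/(s.+1.-1) -es -lead_coefE.
  by rewrite lead_coef_eq0.
have key : (map_poly phi r).[x] = x ^+ s * (map_poly phi p).[x^-1].
  rewrite (horner_coef_wide _ (leq_trans (size_poly _ _) (size_poly _ _))).
  rewrite (horner_coef_wide _ (_ : size (map_poly phi p) <= s.+1)%N); last first.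
    by rewrite size_map_poly es.
  rewrite mulr_sumr (reindex_inj rev_ord_inj) /=; apply: eq_bigr => i _.
  have lis : (i <= s)%N by rewrite -ltnS.
  rewrite !coef_map coef_poly /= subSS.
  rewrite ltnS leq_subr subKn // [RHS]mulrCA; congr (_ * _).
  have -> : x ^+ s = x ^+ (s - i) * x ^+ i by rewrite -exprD subnK.
  rewrite -mulrA exprVn mulfV ?mulr1 //.
  by rewrite expf_neq0.
by move: (tr r rnz); rewrite key mulf_eq0 negb_or => /andP [].
Qed.

Lemma eval2_sumXn (K F : fieldType) (phi : {rmorphism K -> F}) x y (n : nat) (g : 'I_n -> nat) :
  eval2 phi (\sum_(j < n) 'X^(g j)) x y = \sum_(j < n) y ^+ (g j).
Proof.
have [E EE] := eval2_morph phi x y.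
by rewrite -EE rmorph_sum; apply: eq_bigr => j _; rewrite rmorphXn /= EE eval2Y.
Qed.

Lemma map_sumXn (K F : fieldType) (phi : {rmorphism K -> F}) x (n : nat) (g : 'I_n -> nat) :
  (map_poly phi (\sum_(j < n) 'X^(g j))).[x] = \sum_(j < n) x ^+ (g j).
Proof.
rewrite rmorph_sum horner_sum; apply: eq_bigr => j _.
by rewrite /= map_polyXn hornerXn.
Qed.

Unset Implicit Arguments.
Set Strict Implicit.
Theorem corollary4p27 (p m n : nat) (K : finFieldType) :
  prime p -> (0 < m)%N -> (2 <= n)%N -> #|K| = ((p ^ m) ^ n)%N ->
  forall (F1 F2 : fieldType) (phi1 : {rmorphism K -> F1}) (phi2 : {rmorphism K -> F2})
         (x1 y1 : F1) (x2 y2 : F2),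
    is_function_field phi2 (trace_norm_poly K (p ^ m) n) x2 y2 ->
    (is_function_field phi1 (kummer_poly K (p ^ m) n 1) x1 y1 ->
       K_isomorphic phi1 phi2) /\
    (is_function_field phi1 (kummer_poly K (p ^ m) n n.-1) x1 y1 ->
       K_isomorphic phi1 phi2).
Proof.
move=> pp m0 n2 _ F1 F2 phi1 phi2 x1 y1 x2 y2 [tr2 ev2 gen2].
set q := (p ^ m)%N.
have q1 : (1 < q)%N by rewrite /q -(expn0 p) ltn_exp2l // prime_gt1.
have n0 : (0 < n)%N by apply: leq_trans n2.
set D := (\sum_(j < n) q ^ j)%N.
have D0 : (0 < D)%N.
  by rewrite /D (bigD1 (Ordinal n0)) //= expn0.
have [e De] : {e | D = e.+1} by exists D.-1; rewrite prednK.
have dE : ((q ^ n - 1) %/ (q - 1) = e.+1)%N by rewrite d_eq.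
set u : {poly K} := \sum_(j < n) 'X^(q ^ j - 1).
have u0 : u.[0] != 0 by rewrite /u u0E // oner_neq0.
have Xu : 'X * u = \sum_(j < n) 'X^(q ^ j) by rewrite /u -trXu // ltnW.
have hx2 : x2 ^+ e.+1 = (map_poly phi2 ('X * u)).[y2].
  move: ev2; rewrite /trace_norm_poly.
  have [E EE] := eval2_morph phi2 x2 y2.
  rewrite -EE rmorphB /= !EE eval2_sumXn eval2P map_polyXn hornerXn Xu map_sumXn.
  by rewrite -/D De => /eqP; rewrite subr_eq0 => /eqP ->.
split.
- move=> [tr1 ev1 gen1]; apply: (master u0 tr1 _ gen1 tr2 hx2 gen2).
  move: ev1; rewrite /kummer_poly dE.
  have [E EE] := eval2_morph phi1 x1 y1.
  rewrite -EE rmorphB /= rmorphXn /= !EE eval2Y eval2P sym1E -Xu.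
  by move/eqP; rewrite subr_eq0 => /eqP.
move=> [tr1 ev1 gen1].
have x1nz : x1 != 0.
  by have := tr1 'X (negbT (polyX_eq0 _)); rewrite map_polyX hornerX.
have hy1 : y1 ^+ e.+1 = \sum_(j < n) x1 ^+ (D - q ^ j).
  move: ev1; rewrite /kummer_poly dE.
  have [E EE] := eval2_morph phi1 x1 y1.
  rewrite -EE rmorphB /= rmorphXn /= !EE eval2Y eval2P symn1E // map_sumXn.
  by move/eqP; rewrite subr_eq0 => /eqP.
apply: (master (x1 := x1^-1) (y1 := y1 / x1) (e := e) u0 (inv_trans tr1)).
- rewrite Xu map_sumXn expr_div_n hy1 -De mulr_suml; apply: eq_bigr => j _.
  have ljD : (q ^ j <= D)%N by rewrite /D (bigD1 j) //= leq_addr.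
  have -> : x1 ^+ D = x1 ^+ (D - q ^ j) * x1 ^+ (q ^ j) by rewrite -exprD subnK.
  by rewrite invfM mulrA mulfV ?mul1r ?exprVn // expf_neq0.
- move=> z; have [P [Q [nQ ->]]] := gen1 z.
  have [E EE] := eval2_morph phi1 x1^-1 (y1 / x1).
  have [RSE RSD RSM RSV] := ratset_closed E.
  have hRS w : (exists P Q, E Q != 0 /\ w = E P / E Q) ->
      exists P Q, eval2 phi1 Q x1^-1 (y1 / x1) != 0 /\
        w = eval2 phi1 P x1^-1 (y1 / x1) / eval2 phi1 Q x1^-1 (y1 / x1).
    by move=> [P0 [Q0]]; rewrite !EE => h; exists P0, Q0.
  have EX : E ('X%:P) = x1^-1 by rewrite EE eval2X.
  have EXnz : E ('X%:P) != 0 by rewrite EX invr_eq0.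
  have Sall R : exists P Q, E Q != 0 /\ eval2 phi1 R x1 y1 = E P / E Q.
    apply: (gen_closed (S := fun w => exists P Q, E Q != 0 /\ w = E P / E Q)) => //.
    + move=> c; have ee : E (c%:P%:P) = phi1 c by rewrite EE eval2C.
      rewrite -ee; apply: RSE.
    + have -> : x1 = E 1 / E ('X%:P) by rewrite rmorph1 EX div1r invrK.
      by apply: RSV => //; apply: RSE.
    + have -> : y1 = E 'X / E ('X%:P) by rewrite EE eval2Y EX invrK mulfVK.
      by apply: RSV => //; apply: RSE.
  by apply: hRS; apply: RSV => //; apply: Sall.
- exact: tr2.
- exact: hx2.
- exact: gen2.
Qed.
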